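(* Let $g\ge 3$ and let $(\alpha,\beta)$ be a coherent minimally intersecting filling pair on $S_g$, so $i(\alpha,\beta)=2g-1$. Let $P$ be the $4(2g-1)$-gon obtained by cutting $S_g$ along $\alpha\cup\beta$, and let $a_1,\dots,a_{2(2g-1)}$ be its $\alpha$-sides in cyclic clockwise order. Then there exists an index $i$ such that $a_i$ is not glued to its opposite side $a_{i+(2g-1)}$ (indices taken mod $2(2g-1)$). The same statement holds with $\beta$ in place of $\alpha$.
   Context: $S_g$ is the closed orientable surface of genus $g$. A filling pair is a pair of simple closed curves in minimal position whose complement is a union of open disks. It is minimally intersecting if $i(\alpha,\beta)$ is minimal among filling pairs on $S_g$; for $g\ge 3$ this minimum is $2g-1$. It is coherent if the absolute value of the algebraic intersection number equals the geometric intersection number $i(\alpha,\beta)$. For such a pair with $g\ge3$, the complement $S_g\setminus(\alpha\cup\beta)$ is a single open disk. Its closure is a $4(2g-1)$-gon $P$ whose sides alternate between subarcs of $\alpha$ and subarcs of $\beta$ (subarcs run between consecutive intersection points). Each of the $2g-1$ subarcs of $\alpha$, and each of the $2g-1$ subarcs of $\beta$, appears as exactly two sides of $P$, and $S_g$ is recovered by gluing these pairs of sides. The opposite of the $\alpha$-side $a_i$ is the $\alpha$-side $a_{i+(2g-1)}$. *)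

(* Defs.v *)
(* Combinatorial (ribbon-graph / rotation-system) model of a
   pair of transverse simple closed curves alpha, beta on a closed oriented
   surface, whose union alpha \cup beta is a 4-valent graph with n vertices. *)
From mathcomp Require Import all_boot all_algebra all_fingroup.
Set Implicit Arguments.
Unset Strict Implicit.
Unset Printing Implicit Defensive.

(* Intersection points are labelled 'I_n in the order in which alpha visits
   them: alpha = x_0 -> x_1 -> ... -> x_{n-1} -> x_0.  Beta visits them in the
   order p 0, p 1, ..., p (n-1), p 0  (p : {perm 'I_n}).  eps v is the sign of
   the intersection at x_v (true = positive). *)

(* Half-edges (darts) at a vertex: direction 0 = alpha outgoing,
   1 = beta outgoing, 2 = alpha incoming (reversed), 3 = beta incoming. *)
Definition dart (n : nat) := ('I_n * 'I_4)%type.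

Definition dA_out : 'I_4 := inord 0.
Definition dB_out : 'I_4 := inord 1.
Definition dA_in  : 'I_4 := inord 2.
Definition dB_in  : 'I_4 := inord 3.

Definition bnext n (p : {perm 'I_n}) (v : 'I_n) : 'I_n := p (ordS ((p^-1)%g v)).
Definition bprev n (p : {perm 'I_n}) (v : 'I_n) : 'I_n := p (ord_pred ((p^-1)%g v)).

(* edge involution: follow the subarc to its other endpoint *)
Definition theta n (p : {perm 'I_n}) (x : dart n) : dart n :=
  let: (v, d) := x in
  match nat_of_ord d with
  | 0 => (ordS v, dA_in)
  | 1 => (bnext p v, dB_in)
  | 2 => (ord_pred v, dA_out)
  | _ => (bprev p v, dB_out)
  end.

(* rotation (counterclockwise cyclic order of the darts at a vertex):
   at a positive crossing  alpha+, beta+, alpha-, beta-;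
   at a negative crossing  alpha+, beta-, alpha-, beta+. *)
Definition rho n (eps : 'I_n -> bool) (x : dart n) : dart n :=
  let: (v, d) := x in (v, if eps v then ordS d else ord_pred d).

(* face permutation: its orbits are the boundary walks of the complementary
   regions; consecutive darts of an orbit are consecutive sides of the
   corresponding polygon. *)
Definition face n (p : {perm 'I_n}) (eps : 'I_n -> bool) (x : dart n) : dart n :=
  rho eps (theta p x).

(* the complement of alpha \cup beta is a single open disk *)
Definition one_face n (p : {perm 'I_n}) (eps : 'I_n -> bool) : Prop :=
  forall x y : dart n, fconnect (face p eps) x y.

Definition is_alpha_dart n (x : dart n) : bool := ~~ odd x.2.
Definition is_beta_dart n (x : dart n) : bool := odd x.2.

(* the subarc (side of P) carried by a dart: (false, k) = k-th subarc of
   alpha (from x_k to x_{k+1}), (true, k) = k-th subarc of beta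
   (from p k to p (k+1)). *)
Definition subarc n (p : {perm 'I_n}) (x : dart n) : bool * 'I_n :=
  let: (v, d) := x in
  match nat_of_ord d with
  | 0 => (false, v)
  | 1 => (true, (p^-1)%g v)
  | 2 => (false, ord_pred v)
  | _ => (true, ord_pred ((p^-1)%g v))
  end.

(* Starting from a side x0 of P, the sides of the same type (alpha or beta)
   in cyclic order along the boundary of P: the i-th one (i mod 2n). *)
Definition typed_side n (p : {perm 'I_n}) (eps : 'I_n -> bool) (x0 : dart n)
  (i : nat) : dart n :=
  iter (2 * (i %% (2 * n))) (face p eps) x0.

Definition alg_int n (eps : 'I_n -> bool) : int :=
  (\sum_(v < n) (if eps v then 1 else -1))%R.

(* coherent: |algebraic intersection| = geometric intersection (= n, the
   number of intersection points of the pair in minimal position) *)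
Definition coherent n (eps : 'I_n -> bool) : Prop := absz (alg_int eps) = n.

(* Main.v *)
Require Import Defs.
From mathcomp Require Import all_boot all_algebra all_fingroup zify.
Set Implicit Arguments. Unset Strict Implicit. Unset Printing Implicit Defensive.

Lemma dA_outE : dA_out = Ordinal (isT : 0 < 4). Proof. by apply/val_inj; rewrite /= inordK. Qed.
Lemma dB_outE : dB_out = Ordinal (isT : 1 < 4). Proof. by apply/val_inj; rewrite /= inordK. Qed.
Lemma dA_inE : dA_in = Ordinal (isT : 2 < 4). Proof. by apply/val_inj; rewrite /= inordK. Qed.
Lemma dB_inE : dB_in = Ordinal (isT : 3 < 4). Proof. by apply/val_inj; rewrite /= inordK. Qed.

Lemma d_cases (d : 'I_4) : [\/ d = dA_out, d = dB_out, d = dA_in | d = dB_in].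
Proof.
rewrite dA_outE dB_outE dA_inE dB_inE.
case: d => [[|[|[|[|m]]]] Hm].
- by apply: Or41; apply: val_inj.
- by apply: Or42; apply: val_inj.
- by apply: Or43; apply: val_inj.
- by apply: Or44; apply: val_inj.
- by [].
Qed.

Section S.
Variables (n : nat) (p : {perm 'I_n}) (eps : 'I_n -> bool).

Lemma thetaAo v : theta p (v, dA_out) = (ordS v, dA_in). Proof. by rewrite dA_outE. Qed.
Lemma thetaBo v : theta p (v, dB_out) = (bnext p v, dB_in). Proof. by rewrite dB_outE. Qed.
Lemma thetaAi v : theta p (v, dA_in) = (ord_pred v, dA_out). Proof. by rewrite dA_inE. Qed.
Lemma thetaBi v : theta p (v, dB_in) = (bprev p v, dB_out). Proof. by rewrite dB_inE. Qed.

Lemma rhoAo v : rho eps (v, dA_out) = (v, if eps v then dB_out else dB_in).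
Proof. by rewrite /= dA_outE dB_outE dB_inE; case: (eps v); congr pair; apply: val_inj. Qed.
Lemma rhoBo v : rho eps (v, dB_out) = (v, if eps v then dA_in else dA_out).
Proof. by rewrite /= dA_outE dB_outE dA_inE; case: (eps v); congr pair; apply: val_inj. Qed.
Lemma rhoAi v : rho eps (v, dA_in) = (v, if eps v then dB_in else dB_out).
Proof. by rewrite /= dA_inE dB_outE dB_inE; case: (eps v); congr pair; apply: val_inj. Qed.
Lemma rhoBi v : rho eps (v, dB_in) = (v, if eps v then dA_out else dA_in).
Proof. by rewrite /= dA_outE dB_inE dA_inE; case: (eps v); congr pair; apply: val_inj. Qed.

Lemma subAo v : subarc p (v, dA_out) = (false, v). Proof. by rewrite dA_outE. Qed.
Lemma subBo v : subarc p (v, dB_out) = (true, (p^-1)%g v). Proof. by rewrite dB_outE. Qed.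
Lemma subAi v : subarc p (v, dA_in) = (false, ord_pred v). Proof. by rewrite dA_inE. Qed.
Lemma subBi v : subarc p (v, dB_in) = (true, ord_pred ((p^-1)%g v)). Proof. by rewrite dB_inE. Qed.

Lemma bnextK : cancel (bnext p) (bprev p).
Proof. by move=> v; rewrite /bnext /bprev permK ordSK permKV. Qed.
Lemma bprevK : cancel (bprev p) (bnext p).
Proof. by move=> v; rewrite /bnext /bprev permK ord_predK permKV. Qed.

Lemma theta_inv : involutive (theta p).
Proof.
move=> [v d]; case: (d_cases d) => ->.
- by rewrite thetaAo thetaAi ordSK.
- by rewrite thetaBo thetaBi bnextK.
- by rewrite thetaAi thetaAo ord_predK.
- by rewrite thetaBi thetaBo bprevK.
Qed.

Lemma rho_inj : injective (rho eps).
Proof.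
move=> [v d] [w e] /=; case=> <-; case: (eps v).
  by move/ordS_inj => ->.
by move/ord_pred_inj => ->.
Qed.

Lemma face_inj : injective (face p eps).
Proof. move=> x y /rho_inj; exact: (inv_inj theta_inv). Qed.

Lemma odd_face x : odd (face p eps x).2 = ~~ odd x.2.
Proof.
case: x => v d; case: (d_cases d) => ->;
rewrite /face ?thetaAo ?thetaBo ?thetaAi ?thetaBi ?rhoAo ?rhoBo ?rhoAi ?rhoBi;
by case: eps; rewrite /= ?dA_outE ?dB_outE ?dA_inE ?dB_inE.
Qed.

Lemma sub_eq y z : subarc p z = subarc p y -> z = y \/ z = theta p y.
Proof.
case: y z => [v d] [w e].
case: (d_cases d) => ->; case: (d_cases e) => ->;
rewrite ?subAo ?subBo ?subAi ?subBi ?thetaAo ?thetaBo ?thetaAi ?thetaBi //;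
move/eqP; rewrite xpair_eqE /= => //; move/eqP => E.
all: try by [left; rewrite ?E ?(perm_inj E) ?(ord_pred_inj E) ?(perm_inj (ord_pred_inj E))].
all: right.
- by rewrite -E ord_predK.
- by rewrite /bnext -E ord_predK permKV.
- by rewrite E.
- by rewrite /bprev -E permKV.
Qed.
End S.

Section G.
Local Open Scope group_scope.

Lemma grp_lem (gT : finGroupType) (x y : gT) (n : nat) :
  x ^+ n = 1 -> odd n -> x * y * x^-1 = y^-1 -> y * y = 1.
Proof.
move=> xn on H.
have H1 : x * y = y^-1 * x by rewrite -H mulgKV.
have H2 : x * y^-1 = y * x.
  have := congr1 invg H; rewrite !invMg !invgK mulgA => E.
  by rewrite -[in RHS]E mulgKV.
have c2 : commute (x ^+ 2) y.
  by rewrite /commute expgS expg1 -mulgA H1 mulgA H2 -mulgA.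
have cx : commute x y.
  have -> : x = (x ^+ 2) ^+ (n.+1./2).
    have e2 : (2 * n.+1./2 = n.+1)%N.
      by rewrite mul2n -[RHS]odd_double_half /= on.
    by rewrite -expgM e2 expgS xn mulg1.
  by apply: commute_sym; apply: commuteX; apply: commute_sym.
have : y^-1 = y by rewrite -H cx mulgK.
by move=> E; rewrite -{1}E mulVg.
Qed.

End G.


Section P.
Variables (n : nat) (p : {perm 'I_n}).
Hypotheses (n3 : 2 < n) (on : odd n).

Definition sp : {perm 'I_n} := perm (@ordS_inj n).

Lemma spE v : sp v = ordS v. Proof. by rewrite permE. Qed.
Lemma spV v : (sp^-1)%g v = ord_pred v.
Proof. by apply: (@perm_inj _ sp); rewrite permKV spE ord_predK. Qed.

Lemma bnextE v : bnext p v = (sp ^ p)%g v.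
Proof. by rewrite conjgE !permM spE. Qed.
Lemma bprevE v : bprev p v = ((sp ^ p)^-1)%g v.
Proof. by rewrite -conjVg conjgE !permM spV. Qed.

Lemma iter_ordS k (v : 'I_n) : val (iter k (@ordS n) v) = (v + k) %% n.
Proof.
elim: k => [|k IH] /=; first by rewrite addn0 modn_small.
by rewrite IH addnS -addn1 modnDml addn1.
Qed.

Lemma spn : (sp ^+ n = 1)%g.
Proof.
apply/permP => v; rewrite permX perm1; apply: val_inj.
have -> : iter n sp v = iter n (@ordS n) v by apply: eq_iter => w; rewrite spE.
by rewrite iter_ordS modnDr modn_small.
Qed.

Lemma sp2 : (sp * sp != 1)%g.
Proof.
apply/eqP => /permP /(_ (Ordinal (ltnW (ltnW n3)))).
rewrite permM perm1 !spE => /(congr1 val) /=.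
rewrite (@modn_small 1) ?modn_small //; exact: ltnW.
Qed.

Lemma noSq (y : {perm 'I_n}) :
  y = (sp ^ p)%g \/ y = ((sp ^ p)^-1)%g \/ y = sp \/ y = (sp^-1)%g -> (y * y != 1)%g.
Proof.
have h := sp2.
case=> [->|[->|[->|->]]] //.
- by rewrite -conjMg conjg_eq1.
- by rewrite -invMg invg_eq1 -conjMg conjg_eq1.
- by rewrite -invMg invg_eq1.
Qed.

Lemma spn' : ((sp ^ p) ^+ n = 1)%g.
Proof. by rewrite -conjXg spn conj1g. Qed.

Lemma contra_rel (x y : {perm 'I_n}) :
  (x = sp \/ x = (sp ^ p)%g) ->
  (y = (sp ^ p)%g \/ y = ((sp ^ p)^-1)%g \/ y = sp \/ y = (sp^-1)%g) ->
  (x * y * x^-1 = y^-1)%g -> False.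
Proof.
move=> hx hy H.
have xn : (x ^+ n = 1)%g by case: hx => ->; [exact: spn | exact: spn'].
by move: (noSq hy); rewrite (grp_lem xn on H) eqxx.
Qed.
End P.

Section C5.
Import GRing.Theory.


Lemma coh_cases n (eps : 'I_n -> bool) : coherent eps ->
  (forall v, eps v) \/ (forall v, ~~ eps v).
Proof.
rewrite /coherent /alg_int.
rewrite (bigID (fun v => eps v)) /=.
rewrite (eq_bigr (fun _ => 1%R)); last by move=> i ->.
rewrite [X in (_ + X)%R](eq_bigr (fun _ => (-1)%R)); last by move=> i /negbTE ->.
rewrite !sumr_const.
have hc := cardC (fun v => eps v).
rewrite card_ord in hc.
set a := #|_| in hc *; set b := #|_| in hc *.
rewrite mulNrn => H.
have [a0|b0] : a = 0 \/ b = 0 by lia.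
  by right => v; move: (card0_eq a0 v); rewrite /in_mem /= => ->.
by left => v; move: (card0_eq b0 v); rewrite /in_mem /= => /negbFE.
Qed.

End C5.

Section O.
Variables (n : nat) (p : {perm 'I_n}) (eps : 'I_n -> bool).
Hypotheses (n0 : 0 < n) (of1 : one_face p eps).
Local Notation F := (face p eps).

Lemma order_face x : fingraph.order F x = n * 4.
Proof.
have -> : n * 4 = #|{: dart n}| by rewrite card_prod !card_ord.
by rewrite /fingraph.order; apply: eq_card => y; rewrite !inE /= (of1 x y).
Qed.

Lemma iter4n x : iter (n * 4) F x = x.
Proof. by rewrite -(order_face x) (iter_order (@face_inj n p eps)). Qed.

Lemma iter2n_neq x : iter (n * 2) F x != x.
Proof.
have U := fingraph.orbit_uniq F x; rewrite /fingraph.orbit order_face in U.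
have s4 : size (traject F x (n * 4)) = n * 4 by rewrite size_traject.
have l2 : n * 2 < n * 4 by rewrite ltn_pmul2l.
have l0 : 0 < n * 4 by rewrite muln_gt0 n0.
have l2' : n * 2 < size (traject F x (n * 4)) by rewrite s4.
have l0' : 0 < size (traject F x (n * 4)) by rewrite s4.
have := nth_uniq x l2' l0' U.
rewrite !nth_traject // => ->.
by rewrite muln_eq0 negb_or -lt0n n0.
Qed.

Lemma iter_mulK k q x : (forall y, iter k F y = y) -> iter (q * k) F x = x.
Proof.
move=> Hk; elim: q => [|q IH] //.
by rewrite mulSn iterD IH Hk.
Qed.

Lemma per m x : iter (2 * (m %% (2 * n))) F x = iter (2 * m) F x.
Proof.
have -> : 2 * m = m %/ (2 * n) * (n * 4) + 2 * (m %% (2 * n)).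
  rewrite {1}(divn_eq m (2 * n)) mulnDr; congr (_ + _).
  by rewrite mulnCA; congr (_ * _); rewrite mulnA mulnC.
by rewrite iterD (@iter_mulK (n * 4)) // => y; apply: iter4n.
Qed.

Lemma odd_iter j x : odd (iter j F x).2 = odd j (+) odd x.2.
Proof.
elim: j => [|j IH] //=.
by rewrite odd_face IH; case: odd; case: odd.
Qed.

Lemma key x0 :
  (forall i : 'I_(2 * n),
     subarc p (typed_side p eps x0 i) = subarc p (typed_side p eps x0 (i + n))) ->
  forall y : dart n, odd y.2 = odd x0.2 -> theta p (iter 2 F y) = iter 2 F (theta p y).
Proof.
move=> H.
have H1 k : subarc p (iter (2 * k) F x0) = subarc p (iter (n * 2) F (iter (2 * k) F x0)).
  have lt : k %% (2 * n) < 2 * n by rewrite ltn_pmod // muln_gt0 n0.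
  have := H (Ordinal lt); rewrite /typed_side /= !per.
  rewrite -iterD.
  have -> : n * 2 + 2 * k = 2 * (k + n) by rewrite mulnDr mulnC addnC.
  have -> // : iter (2 * (k %% (2 * n) + n)) F x0 = iter (2 * (k + n)) F x0.
  by rewrite -per -[RHS]per modnDml.
have H2 (y : dart n) : odd y.2 = odd x0.2 -> iter (n * 2) F y = theta p y.
  move=> hy.
  have Hf := iter_findex (of1 x0 y).
  set j := findex _ _ _ in Hf.
  have oj : odd j = false.
    by move: hy; rewrite -Hf odd_iter; case: odd; case: odd.
  have ej : j = 2 * j./2 by rewrite -{1}(odd_double_half j) oj add0n mul2n.
  rewrite -Hf ej in hy *.
  case: (sub_eq (esym (H1 j./2))) => // E.
  by move: (iter2n_neq (iter (2 * j./2) F x0)); rewrite E eqxx.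
move=> y hy.
have hy2 : odd (iter 2 F y).2 = odd x0.2 by rewrite odd_iter.
by rewrite -(H2 _ hy2) -(H2 _ hy) -!iterD addnC.
Qed.
End O.


Lemma ifTr (T : Type) (a b : T) : (if true then a else b) = a. Proof. by []. Qed.
Lemma ifFa (T : Type) (a b : T) : (if false then a else b) = b. Proof. by []. Qed.
Lemma iter2E (T : Type) (f : T -> T) x : iter 2 f x = f (f x). Proof. by []. Qed.

Ltac crunch H := rewrite ?iter2E; do 8 (rewrite ?thetaAo ?thetaBo ?thetaAi ?thetaBi ?rhoAo ?rhoBo ?rhoAi ?rhoBi ?H ?ifTr ?ifFa ?ordSK ?ord_predK ?bnextK ?bprevK).

Lemma final n (p : {perm 'I_n}) (eps : 'I_n -> bool) :
  2 < n -> odd n -> one_face p eps -> (forall v, eps v = true) \/ (forall v, eps v = false) ->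
  forall x0 : dart n, exists i : 'I_(2 * n),
       subarc p (typed_side p eps x0 i) != subarc p (typed_side p eps x0 (i + n)).
Proof.
move=> n3 on of1 Heps x0.
have n0 : 0 < n by apply: leq_trans n3.
apply/existsP; rewrite -negb_forall; apply/negP => /forallP H.
have H' : forall i : 'I_(2 * n),
  subarc p (typed_side p eps x0 i) = subarc p (typed_side p eps x0 (i + n)).
  by move=> i; apply/eqP; move: (H i) => /negPn.
have C := key n0 of1 H'.
case ox: (odd x0.2).
- have E v : theta p (iter 2 (face p eps) (v, dB_out)) =
             iter 2 (face p eps) (theta p (v, dB_out)).
    by apply: C; rewrite ox dB_outE.
  case: Heps => He.
  + apply: (@contra_rel n p n3 on (sp n ^ p)%g (sp n)); [by right| by right; right; left|].
    apply/permP => v; move: (E v); rewrite /face; crunch He.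
    move/(congr1 fst) => /= E'.
    by rewrite !permM ?invgK ?spE ?spV -?bprevE -?bnextE.
  + apply: (@contra_rel n p n3 on (sp n ^ p)%g (sp n)^-1); [by right| by right; right; right|].
    apply/permP => v; move: (E v); rewrite /face; crunch He.
    move/(congr1 fst) => /= E'.
    by rewrite !permM ?invgK ?spE ?spV -?bprevE -?bnextE.
- have E v : theta p (iter 2 (face p eps) (v, dA_out)) =
             iter 2 (face p eps) (theta p (v, dA_out)).
    by apply: C; rewrite ox dA_outE.
  case: Heps => He.
  + apply: (@contra_rel n p n3 on (sp n) (sp n ^ p)^-1); [by left| by right; left|].
    apply/permP => v; move: (E v); rewrite /face; crunch He.
    move/(congr1 fst) => /= E'.
    by rewrite !permM ?invgK ?spE ?spV -?bprevE -?bnextE.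
  + apply: (@contra_rel n p n3 on (sp n) (sp n ^ p)); [by left| by left|].
    apply/permP => v; move: (E v); rewrite /face; crunch He.
    move/(congr1 fst) => /= E'.
    by rewrite !permM ?invgK ?spE ?spV -?bprevE -?bnextE.
Qed.


Theorem proposition4 (g n : nat) (p : {perm 'I_n}) (eps : 'I_n -> bool) :
  3 <= g ->
  n = 2 * g - 1 ->
  one_face p eps ->
  coherent eps ->
  (forall x0 : dart n, is_alpha_dart x0 ->
     exists i : 'I_(2 * n),
       subarc p (typed_side p eps x0 i) != subarc p (typed_side p eps x0 (i + n)))
  /\
  (forall x0 : dart n, is_beta_dart x0 ->
     exists i : 'I_(2 * n),
       subarc p (typed_side p eps x0 i) != subarc p (typed_side p eps x0 (i + n))).
Proof.
move=> g3 hn of1 coh.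
have n3 : 2 < n by rewrite hn; lia.
have on : odd n.
  have -> : n = (g.-1).*2.+1 by rewrite hn -mul2n; lia.
  by rewrite /= odd_double.
have He : (forall v, eps v = true) \/ (forall v, eps v = false).
  case: (coh_cases coh) => h; [by left | by right => v; apply: negbTE].
by split => x0 _; apply: final.
Qed.
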